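(* Let $A\neq 1$ and $B\neq 0$ be real constants and consider $$x_{n+10}=\frac{x_n}{A+B\,x_nx_{n+2}x_{n+4}x_{n+6}x_{n+8}}.$$ The equilibrium point $\bar x=0$ is locally asymptotically stable when $|A|>1$. Moreover, for every $A\neq 1$, the nonzero equilibrium points (the real solutions of $A+B\bar x^5-1=0$) are non-hyperbolic.
   Context: An equilibrium $\bar x$ of $x_{n+10}=f(x_n,x_{n+2},\dots,x_{n+8})$ is hyperbolic if no root of the characteristic equation of the linearization of the equation at $\bar x$ has modulus $1$; otherwise it is non-hyperbolic. Local asymptotic stability refers to the standard notion for the equilibrium of this tenth-order recurrence. *)

(* Defs.v *)
From Stdlib Require Import Reals.
From Coquelicot Require Import Coquelicot.
Open Scope R_scope.

Definition F (A B : R) (u0 u1 u2 u3 u4 : R) : R :=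
  u0 / (A + B * u0 * u1 * u2 * u3 * u4).

(* A solution of the tenth-order recurrence x_{n+10} = f(x_n,x_{n+2},...,x_{n+8}),
   indexed from 0 (x_0,...,x_9 are the initial conditions). *)
Definition is_solution (f : R -> R -> R -> R -> R -> R) (x : nat -> R) : Prop :=
  forall n : nat, x (n + 10)%nat = f (x n) (x (n + 2)%nat) (x (n + 4)%nat)
                                     (x (n + 6)%nat) (x (n + 8)%nat).

Definition is_equilibrium (f : R -> R -> R -> R -> R -> R) (xb : R) : Prop :=
  f xb xb xb xb xb = xb.

Definition locally_stable (f : R -> R -> R -> R -> R -> R) (xb : R) : Prop :=
  forall eps : R, 0 < eps -> exists delta : R, 0 < delta /\
    forall x : nat -> R, is_solution f x ->
      (forall i : nat, (i < 10)%nat -> Rabs (x i - xb) < delta) ->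
      forall n : nat, Rabs (x n - xb) < eps.

Definition locally_attracting (f : R -> R -> R -> R -> R -> R) (xb : R) : Prop :=
  exists gamma : R, 0 < gamma /\
    forall x : nat -> R, is_solution f x ->
      (forall i : nat, (i < 10)%nat -> Rabs (x i - xb) < gamma) ->
      is_lim_seq x xb.

Definition locally_asymptotically_stable (f : R -> R -> R -> R -> R -> R) (xb : R) : Prop :=
  is_equilibrium f xb /\ locally_stable f xb /\ locally_attracting f xb.

Definition p0 f xb := Derive (fun t => f t xb xb xb xb) xb.
Definition p1 f xb := Derive (fun t => f xb t xb xb xb) xb.
Definition p2 f xb := Derive (fun t => f xb xb t xb xb) xb.
Definition p3 f xb := Derive (fun t => f xb xb xb t xb) xb.
Definition p4 f xb := Derive (fun t => f xb xb xb xb t) xb.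

Fixpoint Cpow (z : C) (n : nat) : C :=
  match n with O => 1%C | S m => (z * Cpow z m)%C end.

(* Linearization at xb: y_{n+10} = p0 y_n + p1 y_{n+2} + ... + p4 y_{n+8};
   characteristic polynomial lambda^10 - (p0 + p1 lambda^2 + ... + p4 lambda^8). *)
Definition char_poly (f : R -> R -> R -> R -> R -> R) (xb : R) (l : C) : C :=
  (Cpow l 10 - (RtoC (p0 f xb) + RtoC (p1 f xb) * Cpow l 2 + RtoC (p2 f xb) * Cpow l 4
                + RtoC (p3 f xb) * Cpow l 6 + RtoC (p4 f xb) * Cpow l 8))%C.

Definition hyperbolic (f : R -> R -> R -> R -> R -> R) (xb : R) : Prop :=
  forall l : C, char_poly f xb l = 0%C -> Cmod l <> 1.

Definition non_hyperbolic (f : R -> R -> R -> R -> R -> R) (xb : R) : Prop :=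
  ~ hyperbolic f xb.

(* Main.v *)
Require Import Defs.
From Stdlib Require Import Reals Lra Lia Psatz.
From Coquelicot Require Import Coquelicot.
Open Scope R_scope.

Lemma contr (A B d c u0 u1 u2 u3 u4 : R) :
  0 < d -> d <= 1 -> Rabs B * d <= Rabs A - c -> 0 < c ->
  Rabs u0 <= d -> Rabs u1 <= d -> Rabs u2 <= d -> Rabs u3 <= d -> Rabs u4 <= d ->
  Rabs (F A B u0 u1 u2 u3 u4) <= Rabs u0 / c.
Proof.
  intros Hd Hd1 HB Hc H0 H1 H2 H3 H4.
  assert (HP : Rabs (B * u0 * u1 * u2 * u3 * u4) <= Rabs B * d).
  { rewrite !Rabs_mult.
    pose proof (Rabs_pos B). pose proof (Rabs_pos u0). pose proof (Rabs_pos u1).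
    pose proof (Rabs_pos u2). pose proof (Rabs_pos u3). pose proof (Rabs_pos u4).
    assert (Rabs u0 * Rabs u1 <= 1) by nra.
    assert (Rabs u0 * Rabs u1 * Rabs u2 <= 1) by nra.
    assert (Rabs u0 * Rabs u1 * Rabs u2 * Rabs u3 <= 1) by nra.
    assert (Rabs u0 * Rabs u1 * Rabs u2 * Rabs u3 * Rabs u4 <= d) by nra.
    nra. }
  assert (HD : c <= Rabs (A + B * u0 * u1 * u2 * u3 * u4)).
  { pose proof (Rabs_triang_inv A (- (B * u0 * u1 * u2 * u3 * u4))).
    rewrite Rabs_Ropp in H. replace (A - - (B * u0 * u1 * u2 * u3 * u4)) with
      (A + B * u0 * u1 * u2 * u3 * u4) in H by ring. lra. }
  unfold F. unfold Rdiv. rewrite Rabs_mult, Rabs_inv.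
  apply Rmult_le_compat_l. apply Rabs_pos.
  apply Rinv_le_contravar; lra.
Qed.

Lemma bounded (A B d c d' : R) (x : nat -> R) :
  0 < d -> d <= 1 -> Rabs B * d <= Rabs A - c -> 1 <= c -> d' <= d ->
  is_solution (F A B) x -> (forall i, (i < 10)%nat -> Rabs (x i) < d') ->
  forall n, Rabs (x n) < d'.
Proof.
  intros Hd Hd1 HB Hc Hd' Hs Hi n.
  induction n as [n IH] using (well_founded_induction Wf_nat.lt_wf).
  destruct (Nat.lt_ge_cases n 10) as [h|h]; [now apply Hi|].
  replace n with ((n - 10) + 10)%nat by lia. rewrite Hs.
  set (m := (n - 10)%nat).
  assert (IH0 : Rabs (x m) < d') by (apply IH; unfold m; lia).
  assert (Rabs (x m) / c <= Rabs (x m)).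
  { unfold Rdiv. pose proof (Rabs_pos (x m)).
    assert (/ c <= 1). { rewrite <- Rinv_1. apply Rinv_le_contravar; lra. }
    assert (0 < / c) by (apply Rinv_0_lt_compat; lra). nra. }
  eapply Rle_lt_trans; [apply (contr A B d c)|]; try lra;
  (eapply Rlt_le, Rlt_le_trans; [apply IH; unfold m; lia | lra]).
Qed.

Lemma decay (A B d c : R) (x : nat -> R) :
  0 < d -> d <= 1 -> Rabs B * d <= Rabs A - c -> 1 <= c ->
  is_solution (F A B) x -> (forall i, (i < 10)%nat -> Rabs (x i) < d) ->
  forall k n, (10 * k <= n)%nat -> Rabs (x n) <= d * (/ c) ^ k.
Proof.
  intros Hd Hd1 HB Hc Hs Hi k.
  pose proof (bounded A B d c d x Hd Hd1 HB Hc (Rle_refl _) Hs Hi) as Hb.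
  induction k; intros n hn.
  - simpl. rewrite Rmult_1_r. apply Rlt_le, Hb.
  - replace n with ((n - 10) + 10)%nat by lia. rewrite Hs.
    eapply Rle_trans; [apply (contr A B d c)|]; try lra; try (apply Rlt_le, Hb).
    assert (IHk' := IHk (n - 10)%nat ltac:(lia)).
    simpl. unfold Rdiv.
    assert (0 < / c) by (apply Rinv_0_lt_compat; lra).
    replace (d * (/ c * / c ^ k)) with (d * / c ^ k * / c) by ring. nra.
Qed.

Lemma part1 (A B : R) : Rabs A > 1 -> locally_asymptotically_stable (F A B) 0.
Proof.
  intros HA.
  set (c := (Rabs A + 1) / 2).
  set (d := Rmin 1 ((Rabs A - 1) / (2 * (Rabs B + 1)))).
  assert (Hc : 1 <= c) by (unfold c; lra).
  assert (Hd : 0 < d).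
  { unfold d. apply Rmin_glb_lt; [lra|]. pose proof (Rabs_pos B).
    apply Rdiv_lt_0_compat; lra. }
  assert (Hd1 : d <= 1) by (unfold d; apply Rmin_l).
  assert (HB : Rabs B * d <= Rabs A - c).
  { pose proof (Rabs_pos B).
    assert (d <= (Rabs A - 1) / (2 * (Rabs B + 1))) by (unfold d; apply Rmin_r).
    assert (d * (2 * (Rabs B + 1)) <= Rabs A - 1).
    { apply (Rmult_le_compat_r (2 * (Rabs B + 1))) in H0; [|lra].
      unfold Rdiv in H0. rewrite Rmult_assoc, Rinv_l in H0; lra. }
    unfold c. nra. }
  split; [|split].
  - unfold is_equilibrium, F. unfold Rdiv. rewrite Rmult_0_l. reflexivity.
  - intros eps Heps. exists (Rmin eps d). split; [apply Rmin_glb_lt; lra|].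
    intros x Hs Hi n.
    assert (Hmin : Rmin eps d <= d) by apply Rmin_r.
    assert (Hi' : forall i, (i < 10)%nat -> Rabs (x i) < Rmin eps d).
    { intros i hi. specialize (Hi i hi). rewrite Rminus_0_r in Hi. exact Hi. }
    pose proof (bounded A B d c _ x Hd Hd1 HB Hc Hmin Hs Hi' n).
    rewrite Rminus_0_r. eapply Rlt_le_trans; [exact H|apply Rmin_l].
  - exists d. split; [lra|]. intros x Hs Hi.
    assert (Hi' : forall i, (i < 10)%nat -> Rabs (x i) < d).
    { intros i hi. specialize (Hi i hi). rewrite Rminus_0_r in Hi. exact Hi. }
    apply is_lim_seq_Reals. intros eps Heps.
    assert (Hq : Rabs (/ c) < 1).
    { rewrite Rabs_pos_eq. rewrite <- Rinv_1. apply Rinv_lt_contravar; unfold c; lra.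
      apply Rlt_le, Rinv_0_lt_compat; lra. }
    destruct (pow_lt_1_zero (/ c) Hq (eps / d)) as [K HK].
    { apply Rdiv_lt_0_compat; lra. }
    exists (10 * K)%nat. intros n hn. unfold R_dist. rewrite Rminus_0_r.
    eapply Rle_lt_trans; [apply (decay A B d c x Hd Hd1 HB Hc Hs Hi' K n); lia|].
    specialize (HK K (le_n K)).
    rewrite Rabs_pos_eq in HK by (apply pow_le, Rlt_le, Rinv_0_lt_compat; lra).
    apply (Rmult_lt_compat_l d) in HK; [|lra].
    replace (d * (eps / d)) with eps in HK by (field; lra). exact HK.
Qed.

Lemma key_poly (a : R) (l : C) : Cpow l 10 = 1%C -> Cpow l 2 <> 1%C ->
  (Cpow l 10 - (RtoC a + RtoC (a - 1) * Cpow l 2 + RtoC (a-1) * Cpow l 4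
      + RtoC (a-1) * Cpow l 6 + RtoC (a-1) * Cpow l 8))%C = 0%C.
Proof.
  intros H10 H2.
  set (S := (1 + Cpow l 2 + Cpow l 4 + Cpow l 6 + Cpow l 8)%C).
  assert (HF : ((Cpow l 2 - 1) * S)%C = (Cpow l 10 - 1)%C)
    by (unfold S; simpl; ring).
  assert (HS : S = 0%C).
  { destruct (Ceq_dec S 0) as [e|n]; auto. exfalso.
    assert (Cpow l 2 - 1 <> 0)%C.
    { intro E. apply H2. replace (Cpow l 2) with ((Cpow l 2 - 1) + 1)%C by ring.
      rewrite E; ring. }
    apply (Cmult_neq_0 _ _ H n). rewrite HF, H10. ring. }
  rewrite !RtoC_minus.
  transitivity ((Cpow l 10 - 1) - (RtoC a - 1) * S)%C.
  { unfold S. ring. }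
  rewrite H10, HS. ring.
Qed.

Lemma demoivre (t : R) (n : nat) :
  Cpow (cos t, sin t) n = (cos (INR n * t), sin (INR n * t)).
Proof.
  induction n.
  - simpl. rewrite Rmult_0_l, cos_0, sin_0. reflexivity.
  - change (Cpow (cos t, sin t) (S n)) with ((cos t, sin t) * Cpow (cos t, sin t) n)%C.
    rewrite IHn, S_INR.
    replace ((INR n + 1) * t) with (t + INR n * t) by ring.
    rewrite cos_plus, sin_plus. unfold Cmult. simpl. f_equal; ring.
Qed.

Lemma part2 (A B : R) (xb : R) : xb <> 0 -> A + B * xb ^ 5 - 1 = 0 ->
     non_hyperbolic (F A B) xb.
Proof.
  intros Hx Heq.
  assert (D : A + B * xb * xb * xb * xb * xb = 1) by (simpl in Heq; lra).
  assert (E0 : p0 (F A B) xb = A).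
  { unfold p0, F. apply is_derive_unique. auto_derive.
    - rewrite D; lra.
    - rewrite D. simpl in Heq. field_simplify; nra. }
  assert (E1 : p1 (F A B) xb = A - 1).
  { unfold p1, F. apply is_derive_unique. auto_derive.
    - rewrite D; lra.
    - rewrite D. simpl in Heq. field_simplify; nra. }
  assert (E2 : p2 (F A B) xb = A - 1).
  { unfold p2, F. apply is_derive_unique. auto_derive.
    - rewrite D; lra.
    - rewrite D. simpl in Heq. field_simplify; nra. }
  assert (E3 : p3 (F A B) xb = A - 1).
  { unfold p3, F. apply is_derive_unique. auto_derive.
    - rewrite D; lra.
    - rewrite D. simpl in Heq. field_simplify; nra. }
  assert (E4 : p4 (F A B) xb = A - 1).
  { unfold p4, F. apply is_derive_unique. auto_derive.
    - rewrite D; lra.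
    - rewrite D. simpl in Heq. field_simplify; nra. }
  intro Hh.
  set (l := (cos (PI/5), sin (PI/5)) : C).
  apply (Hh l).
  - unfold char_poly. rewrite E0, E1, E2, E3, E4. apply key_poly.
    + unfold l. rewrite demoivre.
      replace (INR 10 * (PI/5)) with (2*PI) by (simpl; field).
      rewrite cos_2PI, sin_2PI. reflexivity.
    + unfold l. rewrite demoivre. intro E. injection E. intros Es _.
      assert (0 < sin (INR 2 * (PI/5))).
      { apply sin_gt_0; simpl; pose proof PI_RGT_0; lra. }
      simpl in H. rewrite Es in H. lra.
  - unfold l, Cmod. simpl. rewrite !Rmult_1_r. rewrite <- sqrt_1. f_equal. pose proof (sin2_cos2 (PI/5)). unfold Rsqr in *. lra.
Qed.

Theorem theorem6 (A B : R) (hA : A <> 1) (hB : B <> 0) :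
  (Rabs A > 1 -> locally_asymptotically_stable (F A B) 0) /\
  (forall xb : R, xb <> 0 -> A + B * xb ^ 5 - 1 = 0 ->
     non_hyperbolic (F A B) xb).
Proof.
  split; [apply part1|intros; apply part2; assumption].
Qed.
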